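(* Let $R$ be a ring which is $2$-primal, local, and strongly weakly nil-clean. Then the $2\times 2$ matrix ring ${\rm M}_2(R)$ is a GSWNC ring.
   Context: All rings are associative with identity. An element $a$ of a ring $S$ is called strongly weakly nil-clean if there exist an idempotent $e \in S$ and a nilpotent $q \in S$ with $eq = qe$ such that $a = q + e$ or $a = q - e$. A ring is strongly weakly nil-clean if all its elements are strongly weakly nil-clean. A ring $S$ is called GSWNC if every non-invertible element of $S$ is strongly weakly nil-clean. A ring is $2$-primal if its prime radical (the intersection of all prime ideals) equals its set of nilpotent elements. *)

(* Defs.v *)
From mathcomp Require Import all_boot all_algebra.
Set Implicit Arguments. Unset Strict Implicit. Unset Printing Implicit Defensive.
Import GRing.Theory.
Local Open Scope ring_scope.

Section RingDefs.
Variable R : nzRingType.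

Definition idempotent (e : R) : Prop := e * e = e.
Definition nilpotent (q : R) : Prop := exists n : nat, q ^+ n = 0.
Definition invertible (a : R) : Prop := exists b : R, a * b = 1 /\ b * a = 1.

Definition strongly_weakly_nil_clean_elt (a : R) : Prop :=
  exists e q : R, idempotent e /\ nilpotent q /\ e * q = q * e /\
    (a = q + e \/ a = q - e).

Definition strongly_weakly_nil_clean_ring : Prop :=
  forall a : R, strongly_weakly_nil_clean_elt a.

Definition GSWNC : Prop :=
  forall a : R, ~ invertible a -> strongly_weakly_nil_clean_elt a.

Definition left_ideal (I : R -> Prop) : Prop :=
  I 0 /\ (forall x y, I x -> I y -> I (x - y)) /\ (forall r x, I x -> I (r * x)).
Definition ideal (I : R -> Prop) : Prop :=
  left_ideal I /\ (forall r x, I x -> I (x * r)).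

Definition maximal_left_ideal (M : R -> Prop) : Prop :=
  left_ideal M /\ ~ M 1 /\
  (forall I, left_ideal I -> ~ I 1 -> (forall x, M x -> I x) -> forall x, I x -> M x).

Definition local_ring : Prop :=
  exists M, maximal_left_ideal M /\
    forall M', maximal_left_ideal M' -> forall x, M' x <-> M x.

Definition prime_ideal (P : R -> Prop) : Prop :=
  ideal P /\ ~ P 1 /\
  (forall a b, (forall r, P (a * r * b)) -> P a \/ P b).

Definition prime_radical (x : R) : Prop := forall P, prime_ideal P -> P x.

Definition two_primal : Prop := forall x : R, prime_radical x <-> nilpotent x.

End RingDefs.

(* Main.v *)
Require Import Defs.
From mathcomp Require Import all_boot all_algebra.
From mathcomp Require Import ring zify.
From mathcomp Require boolp classical_sets.
From Stdlib Require Import Classical.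
Set Implicit Arguments. Unset Strict Implicit. Unset Printing Implicit Defensive.
Import GRing.Theory.
Local Open Scope ring_scope.


Lemma zorn_ext T (F : (T -> Prop) -> Prop) (I0 : T -> Prop) :
  F I0 -> (exists x, I0 x) ->
  (forall C : (T -> Prop) -> Prop, (forall X, C X -> F X) ->
     (forall X Y, C X -> C Y -> (forall x, X x -> Y x) \/ (forall x, Y x -> X x)) ->
     (exists X, C X) -> F (fun x => exists X, C X /\ X x)) ->
  exists M, F M /\ (forall x, I0 x -> M x) /\
    (forall J, F J -> (forall x, M x -> J x) -> forall x, J x -> M x).
Proof.
move=> FI0 [x0 Ix0] Fch.
pose P := fun X : T -> Prop => X = (fun _ => False) \/ (F X /\ forall x, I0 x -> X x).
have [A [PA Amax]] : exists A, P A /\ forall B, classical_sets.proper A B -> ~ P B.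
  apply: classical_sets.Zorn_bigcup => C CP Ctot.
  case: (classic (exists X, C X /\ exists x, X x)) => [[X0 [CX0 [y Xy]]]|hne].
  - right.
    pose C' := fun X => C X /\ exists x, X x.
    have C'F : forall X, C' X -> F X /\ forall x, I0 x -> X x.
      move=> X [CX [x Xx]]; case: (CP X CX) => // hX.
      by move: Xx; rewrite hX.
    have -> : classical_sets.bigcup C id = (fun x => exists X, C' X /\ X x).
      apply: boolp.funext => x; apply: boolp.propext; split.
        by case=> X CX Xx; exists X; split => //; split => //; exists x.
      by case=> X [[CX _] Xx]; exists X.
    split; last first.
      by move=> x Ix; exists X0; split; [split => //; exists y | exact: (proj2 (C'F X0 (conj CX0 (ex_intro _ y Xy))))].
    apply: Fch; first by move=> X /C'F [].
      by move=> X Y [CX _] [CY _]; exact: Ctot.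
    by exists X0; split => //; exists y.
  - left; apply: boolp.funext => x; apply: boolp.propext; split => //.
    by case=> X CX Xx; apply: hne; exists X; split => //; exists x.
have [FA IA] : F A /\ forall x, I0 x -> A x.
  case: PA => // hA; exfalso; apply: (Amax I0); last by right; split.
  by rewrite hA; split => //; move/(_ x0 Ix0).
exists A; split => //; split => // J FJ AJ x Jx.
apply: NNPP => nAx; apply: (Amax J); last by right; split => // y /IA /AJ.
by split => //; move/(_ x Jx).
Qed.


Section Generic.
Variable S : nzRingType.

Lemma expr0_ge (x : S) m n : x ^+ m = 0 -> (m <= n)%N -> x ^+ n = 0.
Proof. by move=> h /subnKC <-; rewrite exprD h mul0r. Qed.

Lemma nil_add (x y : S) m k : GRing.comm x y -> x ^+ m = 0 -> y ^+ k = 0 ->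
  (x + y) ^+ (m + k) = 0.
Proof.
move=> cxy hx hy; rewrite exprDn_comm //; apply: big1 => i _.
case: (leqP k i) => hi.
  by rewrite (expr0_ge hy hi) mulr0 mul0rn.
have : (m <= m + k - i)%N by rewrite -addnBA ?leq_addr // ltnW.
by move=> h; rewrite (expr0_ge hx h) mul0r mul0rn.
Qed.

Lemma nil_opp (x : S) : nilpotent x -> nilpotent (- x).
Proof. by case=> m hm; exists m; rewrite exprNn hm mulr0. Qed.

Lemma inv_1p (q : S) : nilpotent q -> invertible (1 + q).
Proof.
case=> m hm; set s := \sum_(i < m) (- q) ^+ i.
have h1 : (1 + q) * s = 1.
  have := subrX1 (- q) m; rewrite exprNn hm mulr0 sub0r.
  by move/(congr1 -%R); rewrite opprK -mulNr opprB opprK addrC.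
have c : GRing.comm (1 + q) s.
  apply: commr_sum => i _; apply: commrX; apply: commrN.
  by rewrite /GRing.comm mulrDl mulrDr mul1r mulr1.
by exists s; split => //; rewrite -c.
Qed.

Lemma inv_mul (x y : S) : invertible x -> invertible y -> invertible (x * y).
Proof.
case=> x' [h1 h2] [y' [h3 h4]]; exists (y' * x'); split.
  by rewrite mulrA -(mulrA x) h3 mulr1 h1.
by rewrite mulrA -(mulrA y') h2 mulr1 h4.
Qed.

Lemma inv_LR (x l r : S) : l * x = 1 -> x * r = 1 -> invertible x.
Proof.
move=> hl hr; exists r; split => //.
have : l = r by rewrite -[l]mulr1 -hr mulrA hl mul1r.
by move=> <-.
Qed.

Section Phi.
Variable a : S.
Lemma cfu : commr_rmorph (intr : int -> S) a.
Proof. by move=> x; apply: commr_int. Qed.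
Local Notation phi := (horner_morph cfu).

Lemma phi_comm u v : phi u * phi v = phi v * phi u.
Proof. by rewrite -!rmorphM mulrC. Qed.

Lemma comm_phi y p : y * a = a * y -> y * phi p = phi p * y.
Proof.
move=> h; apply: commr_horner => // i.
by rewrite coef_map /= /GRing.comm commr_int.
Qed.
End Phi.

Definition q : {poly int} := 'X - 'X * 'X.
Definition p : {poly int} := 3%:R * 'X * 'X - 2%:R * 'X * 'X * 'X.
Definition r : {poly int} := 3%:R + 4%:R * q.
Lemma e1 : p - p * p = q * q * r. Proof. rewrite /p /r /q; ring. Qed.
Lemma e2 : 'X - p = q * (1 - 2%:R * 'X). Proof. by rewrite /p /q; ring. Qed.

Lemma lift_idem M : forall m a, (m <= M)%N -> (a - a * a) ^+ m = 0 ->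
  exists e : S, e * e = e /\ (forall y, y * a = a * y -> y * e = e * y) /\
     nilpotent (a - e).
Proof.
elim: M => [|M IH] m a Hm Ha.
  move: Hm; rewrite leqn0 => /eqP Hm; subst m.
  by move: Ha; rewrite expr0 => /eqP; rewrite oner_eq0.
case: m Hm Ha => [|[|m]] Hm Ha.
- by move: Ha; rewrite expr0 => /eqP; rewrite oner_eq0.
- exists a; split; first by move: Ha; rewrite expr1 => /eqP; rewrite subr_eq0 => /eqP.
  by split => //; exists 1%N; rewrite subrr expr1.
have hX : (horner_morph (cfu a)) 'X = a by apply: horner_morphX.
have hq : (horner_morph (cfu a)) q = a - a * a by rewrite /q rmorphB rmorphM /= hX.
have Hq : ((horner_morph (cfu a)) q) ^+ m.+2 = 0 by rewrite hq.
have Ha' : ((horner_morph (cfu a)) p - (horner_morph (cfu a)) p * (horner_morph (cfu a)) p) ^+ m.+1 = 0.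
  rewrite -rmorphM -rmorphB e1 -rmorphXn exprMn -expr2 -exprM rmorphM !rmorphXn /=.
  by rewrite (expr0_ge Hq) ?mul0r //; lia.
have [e [ee [ce ne]]] := IH m.+1 ((horner_morph (cfu a)) p) Hm Ha'.
exists e; split => //; split.
  by move=> y hy; apply: ce; apply: comm_phi.
have -> : a - e = (horner_morph (cfu a)) ('X - p) + ((horner_morph (cfu a)) p - e) by rewrite rmorphB /= hX addrA subrK.
case: ne => k hk.
exists (m.+2 + k)%N; apply: nil_add => //.
- apply: commrB; first exact: phi_comm.
  by apply: ce; apply: phi_comm.
- by rewrite e2 rmorphM /= exprMn_comm ?Hq ?mul0r //; apply: phi_comm.
Qed.

End Generic.

Section Ids.
Variable V : zmodType.
Implicit Types x y z u w p q r s : V.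
Lemma I1 x y z : (-x + y) - (y - z) = z - x.
Proof. by rewrite opprB addrA addrAC addrK addrC. Qed.
Lemma I2 x y u z : (-x + y) - (u - z) = (y - u) + (z - x).
Proof. by rewrite opprB addrACA addrC (addrC (- x)). Qed.
Lemma I3 p s r q : (p + s - r) - (s - q) = p + q - r.
Proof. by rewrite opprB addrACA (addrAC p) (addrC (- r)) addrA addrK. Qed.
Lemma I4 x y z w : (x - y) + (y + z - w) = x + z - w.
Proof. by rewrite !addrA subrK. Qed.
Lemma I5 x y s z w : (x - y) - (s - y) + (s + z - w) = x + z - w.
Proof. by rewrite opprB [(x - y) + (y - s)]addrA subrK I4. Qed.
End Ids.
Arguments I1 {V}. Arguments I2 {V}. Arguments I3 {V}. Arguments I4 {V}. Arguments I5 {V}.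


Section RBasic.
Variable R : nzRingType.
Hypothesis tp : two_primal R.
Local Notation N := (@nilpotent R).

Lemma N0 : N 0. Proof. by exists 1%N; rewrite expr1. Qed.
Lemma N1 : ~ N 1.
Proof. by case=> m; rewrite expr1n => /eqP; rewrite oner_eq0. Qed.
Lemma N_sub (x y : R) : N x -> N y -> N (x - y).
Proof.
move=> /tp hx /tp hy; apply/tp => P PP.
have [[[_ [Hs _]] _] _] := PP; exact: Hs (hx P PP) (hy P PP).
Qed.
Lemma N_mull (r x : R) : N x -> N (r * x).
Proof.
move=> /tp hx; apply/tp => P PP.
have [[[_ [_ Hl]] _] _] := PP; exact: Hl (hx P PP).
Qed.
Lemma N_mulr (r x : R) : N x -> N (x * r).
Proof.
move=> /tp hx; apply/tp => P PP.
have [[_ Hr] _] := PP; exact: Hr (hx P PP).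
Qed.
Lemma N_opp (x : R) : N x -> N (- x).
Proof. by move=> h; rewrite -sub0r; apply: N_sub => //; apply: N0. Qed.
Lemma N_add (x y : R) : N x -> N y -> N (x + y).
Proof. by move=> hx hy; rewrite -[y]opprK; apply: N_sub => //; apply: N_opp. Qed.

Hypothesis loc : local_ring R.

Lemma max_exists (L : R -> Prop) : left_ideal L -> ~ L 1 ->
  exists M, maximal_left_ideal M /\ forall x, L x -> M x.
Proof.
move=> LL L1.
have ch : forall C : (R -> Prop) -> Prop,
    (forall X, C X -> left_ideal X /\ ~ X 1) ->
    (forall X Y, C X -> C Y -> (forall x, X x -> Y x) \/ (forall x, Y x -> X x)) ->
    (exists X, C X) ->
    left_ideal (fun x => exists X, C X /\ X x) /\ ~ (exists X, C X /\ X 1).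
  move=> C CF Ctot [X0 CX0]; split; last first.
    by case=> X [CX X1]; case: (CF X CX) => _; apply.
  split; first by exists X0; split => //; case: (CF X0 CX0) => [[]].
  split.
    move=> x y [X [CX Xx]] [Y [CY Yy]].
    case: (Ctot X Y CX CY) => h.
      exists Y; split => //; case: (CF Y CY) => [[_ [hs _]] _]; exact: hs (h x Xx) Yy.
    exists X; split => //; case: (CF X CX) => [[_ [hs _]] _]; exact: hs Xx (h y Yy).
  move=> r x [X [CX Xx]]; exists X; split => //.
  by case: (CF X CX) => [[_ [_ hl]] _]; apply: hl.
have [M [[FM1 FM2] [LM Mmax]]] := @zorn_ext R (fun X => left_ideal X /\ ~ X 1) L
  (conj LL L1) (ex_intro _ 0 (proj1 LL)) ch.
exists M; split => //; split => //; split => // I LI I1 MI.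
by apply: Mmax.
Qed.

Lemma idem01 (e : R) : e * e = e -> e = 0 \/ e = 1.
Proof.
move=> ee; apply: NNPP => H.
have e0 : e <> 0 by move=> h; apply: H; left.
have e1 : e <> 1 by move=> h; apply: H; right.
have [M1 [MM1 L1M]] : exists M, maximal_left_ideal M /\
    forall x, (exists r, x = r * (1 - e)) -> M x.
  apply: max_exists.
    split; first by exists 0; rewrite mul0r.
    split; first by move=> x y [r ->] [s ->]; exists (r - s); rewrite mulrBl.
    by move=> t x [r ->]; exists (t * r); rewrite mulrA.
  case=> r h; apply: e0.
  have := congr1 (fun z => z * e) h; rewrite mul1r -mulrA mulrBl mul1r ee subrr mulr0.
  by [].
have [M2 [MM2 L2M]] : exists M, maximal_left_ideal M /\
    forall x, (exists r, x = r * e) -> M x.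
  apply: max_exists.
    split; first by exists 0; rewrite mul0r.
    split; first by move=> x y [r ->] [s ->]; exists (r - s); rewrite mulrBl.
    by move=> t x [r ->]; exists (t * r); rewrite mulrA.
  case=> r h; apply: e1.
  have := congr1 (fun z => z * (1 - e)) h; rewrite mul1r -mulrA mulrBr mulr1 ee subrr mulr0.
  by move/eqP; rewrite subr_eq0 => /eqP.
case: loc => M [[[M0 [Ms Ml]] [M1n _]] Muniq].
have Ma : M (1 - e) by apply/(Muniq M1 MM1); apply: L1M; exists 1; rewrite mul1r.
have Mb : M e by apply/(Muniq M2 MM2); apply: L2M; exists 1; rewrite mul1r.
apply: M1n.
have := Ms _ _ Ma (Ml (-1) _ Mb).
by rewrite mulN1r opprK subrK.
Qed.

Hypothesis sw : strongly_weakly_nil_clean_ring R.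

Lemma tri (x : R) : N x \/ N (x - 1) \/ N (x + 1).
Proof.
have [e [q [ie [nq [_ hx]]]]] := sw x.
case: (idem01 ie) => E; rewrite E in hx; case: hx => ->.
- by left; rewrite addr0.
- by left; rewrite subr0.
- by right; left; rewrite addrK.
- by right; right; rewrite subrK.
Qed.

Lemma comm_shift (x y c : R) : c * y = y * c ->
  x * y - y * x = (x - c) * y - y * (x - c).
Proof.
by move=> hc; rewrite mulrBl mulrBr hc opprB addrA subrK.
Qed.

Lemma modcomm (x y : R) : N (x * y - y * x).
Proof.
case: (tri x) => [hx|[hx|hx]].
- by apply: N_sub; [apply: N_mulr|apply: N_mull].
- rewrite (comm_shift x (c := 1)) ?mul1r ?mulr1 //.
  by apply: N_sub; [apply: N_mulr|apply: N_mull].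
- rewrite (comm_shift x (c := -1)) ?mulN1r ?mulrN1 // opprK.
  by apply: N_sub; [apply: N_mulr|apply: N_mull].
Qed.

Lemma inv_opp (x : R) : invertible x -> invertible (- x).
Proof. by case=> y [h1 h2]; exists (- y); rewrite !mulrNN. Qed.

Lemma unitN (x : R) : ~ N x -> invertible x.
Proof.
move=> hx; case: (tri x) => [//|[h|h]].
- by rewrite -[x](addrNK 1) addrC; apply: inv_1p.
- have -> : x = - (1 + - (x + 1)) by rewrite opprD opprK addrC addrK.
  by apply: inv_opp; apply: inv_1p; apply: nil_opp.
Qed.

End RBasic.


Section Mat.
Variable R : nzRingType.
Local Notation MR := ('M[R]_2 : nzRingType).
Definition i0 : 'I_2 := ord0.
Definition i1 : 'I_2 := ord_max.

Definition M2 (a b c d : R) : MR :=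
  \matrix_(i < 2, j < 2) if (i : nat) == 0%N then (if (j : nat) == 0%N then a else b)
                         else (if (j : nat) == 0%N then c else d).

Lemma M2E (X : MR) : X = M2 (X i0 i0) (X i0 i1) (X i1 i0) (X i1 i1).
Proof.
apply/matrixP => i j; rewrite mxE.
by case: i => [[|[|//]] ?]; case: j => [[|[|//]] ?] /=; congr (X _ _); apply: val_inj.
Qed.

Lemma M2_00 a b c d : M2 a b c d i0 i0 = a. Proof. by rewrite mxE. Qed.
Lemma M2_01 a b c d : M2 a b c d i0 i1 = b. Proof. by rewrite mxE. Qed.
Lemma M2_10 a b c d : M2 a b c d i1 i0 = c. Proof. by rewrite mxE. Qed.
Lemma M2_11 a b c d : M2 a b c d i1 i1 = d. Proof. by rewrite mxE. Qed.

Lemma M2M a b c d a' b' c' d' :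
  M2 a b c d * M2 a' b' c' d' =
  M2 (a * a' + b * c') (a * b' + b * d') (c * a' + d * c') (c * b' + d * d').
Proof.
apply/matrixP => i j; rewrite !mxE !big_ord_recl big_ord0 addr0 !mxE /=.
by case: i => [[|[|//]] ?]; case: j => [[|[|//]] ?].
Qed.

Lemma M2D a b c d a' b' c' d' :
  M2 a b c d + M2 a' b' c' d' = M2 (a + a') (b + b') (c + c') (d + d').
Proof.
apply/matrixP => i j; rewrite !mxE.
by case: i => [[|[|//]] ?]; case: j => [[|[|//]] ?].
Qed.

Lemma M2N a b c d : - M2 a b c d = M2 (- a) (- b) (- c) (- d).
Proof.
apply/matrixP => i j; rewrite !mxE.
by case: i => [[|[|//]] ?]; case: j => [[|[|//]] ?].
Qed.

Lemma M2B a b c d a' b' c' d' :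
  M2 a b c d - M2 a' b' c' d' = M2 (a - a') (b - b') (c - c') (d - d').
Proof. by rewrite M2N M2D. Qed.

Lemma M2s (x : R) : x%:M = M2 x 0 0 x.
Proof.
apply/matrixP => i j; rewrite !mxE.
by case: i => [[|[|//]] ?]; case: j => [[|[|//]] ?].
Qed.

Lemma M2_1 : (1 : MR) = M2 1 0 0 1. Proof. exact: M2s. Qed.
Lemma M2_0 : (0 : MR) = M2 0 0 0 0.
Proof.
apply/matrixP => i j; rewrite !mxE.
by case: i => [[|[|//]] ?]; case: j => [[|[|//]] ?].
Qed.

End Mat.


Section Kothe.
Variable R : nzRingType.
Hypothesis tp : two_primal R.
Local Notation MR := ('M[R]_2 : nzRingType).

Lemma ideal_gen (P : MR -> Prop) (Z : MR) : ideal P ->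
  let G := fun x => forall I, ideal I -> (forall y, P y -> I y) -> I Z -> I x in
  ideal G /\ (forall y, P y -> G y) /\ G Z.
Proof.
move=> IP G; split; last by split; [move=> y Py I _ PI _; apply: PI | by move=> I].
split; first split.
- by move=> I [[I0 _] _].
- split.
  + by move=> x y Gx Gy I II PI IZ; case: (II) => [[_ [Hs _]] _]; apply: Hs; [apply: Gx|apply: Gy].
  + by move=> r x Gx I II PI IZ; case: (II) => [[_ [_ Hl]] _]; apply: Hl; apply: Gx.
- by move=> r x Gx I II PI IZ; case: (II) => [_ Hr]; apply: Hr; apply: Gx.
Qed.

Lemma NM_nil (Q : MR) : (forall i j, nilpotent (Q i j)) -> nilpotent Q.
Proof.
move=> NQ; apply: NNPP => nQ.
have hQ : forall k, Q ^+ k <> 0 by move=> k h; apply: nQ; exists k.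
pose F := fun X : MR -> Prop => ideal X /\ forall k, ~ X (Q ^+ k).
have F0 : F (fun X => X = 0).
  split; last by move=> k; apply: hQ.
  split; first split => //; first split.
  - by move=> x y -> ->; rewrite subrr.
  - by move=> r x ->; rewrite mulr0.
  - by move=> r x ->; rewrite mul0r.
have ch : forall C : (MR -> Prop) -> Prop, (forall X, C X -> F X) ->
    (forall X Y, C X -> C Y -> (forall x, X x -> Y x) \/ (forall x, Y x -> X x)) ->
    (exists X, C X) -> F (fun x => exists X, C X /\ X x).
  move=> C CF Ctot [X0 CX0]; split; last first.
    by move=> k [X [CX Xk]]; case: (CF X CX) => _ h; exact: h k Xk.
  split; first split.
  - by exists X0; split => //; case: (CF X0 CX0) => [[[h0 _] _] _].
  - split.
      move=> x y [X [CX Xx]] [Y [CY Yy]].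
      case: (Ctot X Y CX CY) => h.
        exists Y; split => //; case: (CF Y CY) => [[[_ [hs _]] _] _]; exact: hs (h x Xx) Yy.
      exists X; split => //; case: (CF X CX) => [[[_ [hs _]] _] _]; exact: hs Xx (h y Yy).
    move=> r x [X [CX Xx]]; exists X; split => //.
    by case: (CF X CX) => [[[_ [_ hl]] _] _]; apply: hl.
  - move=> r x [X [CX Xx]]; exists X; split => //.
    by case: (CF X CX) => [[_ hr] _]; apply: hr.
have [P [[IP avP] [_ Pmax]]] := @zorn_ext MR F (fun X => X = 0) F0 (ex_intro _ 0 erefl) ch.
have [[P0 [Ps Pl]] Pr] := IP.
have Pprime : forall A B, (forall X, P (A * X * B)) -> P A \/ P B.
  move=> A B hAB; apply: NNPP => nAB.
  have nA : ~ P A by move=> h; apply: nAB; left.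
  have nB : ~ P B by move=> h; apply: nAB; right.
  have [IGA [PGA GAA]] := ideal_gen A IP.
  have [IGB [PGB GBB]] := ideal_gen B IP.
  set GA := (fun x => _) in IGA PGA GAA.
  set GB := (fun x => _) in IGB PGB GBB.
  have [k Gk] : exists k, GA (Q ^+ k).
    apply: NNPP => h; apply: nA; apply: (Pmax GA) => //.
    by split => // k Gk; apply: h; exists k.
  have [j Gj] : exists j, GB (Q ^+ j).
    apply: NNPP => h; apply: nB; apply: (Pmax GB) => //.
    by split => // j Gj; apply: h; exists j.
  have I2 : forall y, GB y -> forall X, P (A * X * y).
    move=> y Gy; apply: (Gy (fun y => forall X, P (A * X * y))) => //.
    split; first split.
    - by move=> X; rewrite mulr0.
    - split.
        by move=> x z hx hz X; rewrite mulrBr; apply: Ps.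
      by move=> r x hx X; rewrite mulrA -(mulrA A); apply: hx.
    - by move=> r x hx X; rewrite mulrA; apply: Pr.
    by move=> z Pz X; apply: Pl.
  have I1 : forall x, GA x -> forall y, GB y -> P (x * y).
    move=> x Gx; apply: (Gx (fun x => forall y, GB y -> P (x * y))) => //.
    + split; first split.
      - by move=> y _; rewrite mul0r.
      - split.
          by move=> z w hz hw y Gy; rewrite mulrBl; apply: Ps; [apply: hz|apply: hw].
        by move=> r z hz y Gy; rewrite -mulrA; apply: Pl; apply: hz.
      - move=> r z hz y Gy; rewrite -mulrA; apply: hz.
        by case: IGB => [[_ [_ Hl]] _]; apply: Hl.
    + by move=> z Pz y _; apply: Pr.
    + by move=> y Gy; have := I2 y Gy 1; rewrite mulr1.
  by apply: (avP (k + j)%N); rewrite exprD; apply: I1.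
pose e00 (x : R) := M2 x 0 0 0.
pose Ir := fun x => P (e00 x).
have PQ : forall i j, Ir (Q i j).
  move=> i j; apply: (proj2 (tp _) (NQ i j)).
  split; first split; first split.
  - by rewrite /Ir /e00 -M2_0.
  - split.
      by move=> x y; rewrite /Ir /e00 => hx hy; have := Ps _ _ hx hy; rewrite M2B !subr0.
    move=> r x hx; have := Pl (e00 r) _ hx.
    by rewrite /e00 M2M !(mul0r, mulr0, addr0).
  - move=> r x hx; have := Pr (e00 r) _ hx.
    by rewrite /e00 M2M !(mul0r, mulr0, addr0).
  split.
    move=> h; apply: (avP 0%N); rewrite expr0.
    have h2 := Pl (M2 0 0 1 0) _ (Pr (M2 0 1 0 0) _ h).
    have := Ps _ _ h (Pl (-1) _ h2).
    rewrite /e00 !M2M !(mul0r, mulr0, addr0, add0r, mul1r, mulr1) mulN1r.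
    by rewrite M2N M2B !(opprK, oppr0, subr0, sub0r) !addr0 -M2_1.
  move=> a b hab; case: (Pprime (e00 a) (e00 b)) => [X|h|h]; [|by left|by right].
  rewrite (M2E X) /e00 !M2M !(mul0r, mulr0, addr0, add0r).
  exact: hab.
have Padd : forall x y, P x -> P y -> P (x + y).
  move=> x y hx hy; have := Ps _ _ hx (Pl (-1) _ hy).
  by rewrite mulN1r opprK.
have h00 : P (M2 (Q i0 i0) 0 0 0) by apply: PQ.
have h01 : P (M2 0 (Q i0 i1) 0 0).
  have := Pr (M2 0 1 0 0) _ (PQ i0 i1).
  by rewrite /e00 M2M !(mul0r, mulr0, addr0, add0r, mulr1).
have h10 : P (M2 0 0 (Q i1 i0) 0).
  have := Pl (M2 0 0 1 0) _ (PQ i1 i0).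
  by rewrite /e00 M2M !(mul0r, mulr0, addr0, add0r, mul1r).
have h11 : P (M2 0 0 0 (Q i1 i1)).
  have := Pr (M2 0 1 0 0) _ (Pl (M2 0 0 1 0) _ (PQ i1 i1)).
  by rewrite /e00 !M2M !(mul0r, mulr0, addr0, add0r, mul1r, mulr1).
apply: (avP 1%N); rewrite expr1 (M2E Q).
have := Padd _ _ (Padd _ _ h00 h01) (Padd _ _ h10 h11).
by rewrite !M2D !(addr0, add0r).
Qed.
End Kothe.


Section Main.
Variable R : nzRingType.
Hypothesis tp : two_primal R.
Local Notation MR := ('M[R]_2 : nzRingType).
Local Notation N := (@nilpotent R).
Definition NMp (X : MR) := forall i j, N (X i j).

Lemma NMp_M2 a b c d : N a -> N b -> N c -> N d -> NMp (M2 a b c d).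
Proof.
by move=> ha hb hc hd [[|[|//]] ?] [[|[|//]] ?]; rewrite mxE.
Qed.

Lemma NMp_mulr (X Y : MR) : NMp X -> NMp (X * Y).
Proof.
move=> h; rewrite (M2E X) (M2E Y) M2M.
by apply: NMp_M2; apply: (N_add tp); apply: (N_mulr tp); apply: h.
Qed.

Lemma NMp_mull (X Y : MR) : NMp X -> NMp (Y * X).
Proof.
move=> h; rewrite (M2E X) (M2E Y) M2M.
by apply: NMp_M2; apply: (N_add tp); apply: (N_mull tp); apply: h.
Qed.

Lemma sM (x y : R) : (x%:M : MR) * y%:M = (x * y)%:M.
Proof. by rewrite [RHS]scalar_mxM. Qed.

Hypothesis loc : local_ring R.
Hypothesis sw : strongly_weakly_nil_clean_ring R.

Lemma det_nonN a b c d : ~ N (a * d - b * c) -> invertible (M2 a b c d).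
Proof.
move=> hd; have [d' [hd1 hd2]] := unitN loc sw hd.
set dl := a * d - b * c in hd hd1 hd2 *.
set A := M2 a b c d.
set adj := M2 d (- b) (- c) a.
have ND1 : NMp (A * adj - dl%:M).
  rewrite /A /adj M2M M2s M2B; apply: NMp_M2.
  - by rewrite mulrN subrr; apply: N0.
  - by rewrite subr0 mulrN addrC; apply: (modcomm tp loc sw).
  - by rewrite subr0 mulrN; apply: (modcomm tp loc sw).
  - by rewrite mulrN I2; apply: (N_add tp); apply: (modcomm tp loc sw).
have ND2 : NMp (adj * A - dl%:M).
  rewrite /A /adj M2M M2s M2B; apply: NMp_M2.
  - by rewrite mulNr opprB addrA subrK; apply: (modcomm tp loc sw).
  - by rewrite subr0 mulNr; apply: (modcomm tp loc sw).
  - by rewrite subr0 mulNr addrC; apply: (modcomm tp loc sw).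
  - by rewrite mulNr I1; apply: (modcomm tp loc sw).
have [V1 [hV1 _]] := inv_1p (NM_nil tp (NMp_mulr (d'%:M) ND1)).
have [V2 [_ hV2]] := inv_1p (NM_nil tp (NMp_mull (d'%:M) ND2)).
apply: (@inv_LR _ _ (V2 * d'%:M * adj) (adj * d'%:M * V1)).
  rewrite -hV2 -!mulrA; congr (_ * _).
  by rewrite mulrBr sM hd2 idmxE addrC subrK.
rewrite -hV1 !mulrA; congr (_ * _).
by rewrite mulrBl sM hd1 idmxE addrC subrK.
Qed.

Lemma CH a b c d (eps : R) : (forall y, eps * y = y * eps) ->
  N (a * d - b * c) -> N (a + d - eps) ->
  NMp (M2 a b c d * M2 a b c d - M2 (eps * a) (eps * b) (eps * c) (eps * d)).
Proof.
move=> he hd ht; rewrite M2M M2B; apply: NMp_M2.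
- rewrite he -(I3 (a * a) (a * d) (a * eps) (b * c)); apply: (N_sub tp) => //.
  by rewrite -mulrDr -mulrBr; apply: (N_mull tp).
- rewrite he -(I4 (a * b) (b * a) (b * d) (b * eps)); apply: (N_add tp).
    exact: (modcomm tp loc sw).
  by rewrite -mulrDr -mulrBr; apply: (N_mull tp).
- rewrite -(I4 (c * a) (a * c) (d * c) (eps * c)); apply: (N_add tp).
    exact: (modcomm tp loc sw).
  by rewrite -mulrDl -mulrBl; apply: (N_mulr tp).
- rewrite -(I5 (c * b) (b * c) (a * d) (d * d) (eps * d)); apply: (N_add tp).
    by apply: (N_sub tp) => //; exact: (modcomm tp loc sw).
  by rewrite -mulrDl -mulrBl; apply: (N_mulr tp).
Qed.

End Main.

Theorem theorem2p38 (R : nzRingType) :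
  two_primal R -> local_ring R -> strongly_weakly_nil_clean_ring R ->
  GSWNC ('M[R]_2 : nzRingType).
Proof.
move=> tp loc sw A nA.
have EA := M2E A.
move: (A i0 i0) (A i0 i1) (A i1 i0) (A i1 i1) EA => a b c d EA; subst A.
case: (classic (nilpotent (a * d - b * c))) => hd; last first.
  by exfalso; apply: nA; apply: det_nonN.
set X := M2 a b c d in nA *.
have [eps [he [Eeps ht]]] : exists eps : R, (forall y, eps * y = y * eps) /\
   (eps = 0 \/ eps = 1 \/ eps = -1) /\ nilpotent (a + d - eps).
  case: (tri loc sw (a + d)) => [h|[h|h]].
  - by exists 0; split; [move=> y; rewrite mul0r mulr0|split; [left|rewrite subr0]].
  - by exists 1; split; [move=> y; rewrite mul1r mulr1|split; [right; left|]].
  - by exists (-1); split; [move=> y; rewrite mulN1r mulrN1|split; [right; right|rewrite opprK]].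
have CHm := CH tp loc sw he hd ht.
case: Eeps => [E|[E|E]]; rewrite E in CHm.
- move: CHm; rewrite !mul0r -M2_0 subr0 -/X => /(NM_nil tp) [k hk].
  exists 0, X; split; first exact: mul0r.
  split; first by exists (2 * k)%N; rewrite exprM expr2.
  by split; [rewrite mul0r mulr0|left; rewrite addr0].
- move: CHm; rewrite !mul1r -/X => /(NM_nil tp) /nil_opp [m hm].
  rewrite opprB in hm.
  have [e [ee [ce ne]]] := @lift_idem _ m m X (leqnn m) hm.
  exists e, (X - e); split => //; split => //; split; last by left; rewrite subrK.
  by rewrite mulrBr mulrBl ee (ce X).
- move: CHm; rewrite !mulN1r -M2N -/X opprK => /(NM_nil tp) /nil_opp [m hm].
  have hm' : (- X - (- X) * (- X)) ^+ m = 0.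
    by rewrite mulrNN addrC -opprD.
  have [e [ee [ce ne]]] := @lift_idem _ m m (- X) (leqnn m) hm'.
  exists e, (X + e); split => //; split.
    have := nil_opp ne; rewrite opprB opprK addrC.
    by [].
  split; last by right; rewrite addrK.
  have cX : X * e = e * X.
    by apply: oppr_inj; rewrite -mulNr -mulrN (ce (- X)).
  by rewrite mulrDr mulrDl ee cX.
Qed.
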